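(* Let $n$ be a non-negative integer and $r\in\mathbb{C}\setminus\mathbb{Z}^{-}$, $r\neq0$. Then \[ \sum_{k=1}^{n}(-1)^{k-1}\frac{\binom{n}{k}}{\binom{k+r}{r}}H_k^2=\frac{1}{n+r}(H_{n+r}-H_r)(rH_r-1)+\frac{n}{(n+r)^2}\left(H_r-\frac1r\right)+\frac{r}{n+r}H_nH_{n+r-1}-r\sum_{k=1}^{n}\frac{H_{n-k+r-1}}{k(n-k+r)}. \] In particular, \[ \sum_{k=1}^{n}(-1)^{k-1}\frac{\binom{n}{k}}{k+1}H_k^2=\frac{1}{2(n+1)}\left(3H_n^{(2)}-H_n^2\right). \]
   Context: $\mathbb{Z}^{-}$ denotes the set of negative integers. For complex $z$ not a negative integer, $H_z=\psi(z+1)+\gamma$ ($\psi$ the digamma function, $\gamma$ Euler's constant); for integers $m\ge0$, $H_m=\sum_{j=1}^m1/j$ and $H_m^{(2)}=\sum_{j=1}^m1/j^2$. Binomial coefficients with complex entries: $\binom{x}{y}=\frac{\Gamma(x+1)}{\Gamma(y+1)\Gamma(x-y+1)}$. *)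

(* Defs.v *)
From Stdlib Require Import Reals.
From Coquelicot Require Import Coquelicot.
Open Scope R_scope.

Fixpoint Harm (m : nat) : R :=
  match m with O => 0 | S p => Harm p + / INR (S p) end.
Fixpoint Harm2 (m : nat) : R :=
  match m with O => 0 | S p => Harm2 p + / (INR (S p) ^ 2) end.

(* Complex harmonic number H_z = psi(z+1) + gamma, via the classical series
   psi(z+1) + gamma = sum_{j>=1} z / (j (j + z)), valid for z not in Z^-. *)
Definition Hterm (z : C) (j : nat) : C :=
  Cdiv z (Cmult (RtoC (INR (S j))) (Cplus (RtoC (INR (S j))) z)).
Definition HarmC (z : C) : C :=
  (Series (fun j => Re (Hterm z j)), Series (fun j => Im (Hterm z j))).

(* binom(k + r, r) = Gamma(k+r+1)/(Gamma(r+1) Gamma(k+1)) for k : nat,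
   which equals prod_{j=1}^k (r + j)/j. *)
Fixpoint binomKR (r : C) (k : nat) : C :=
  match k with
  | O => RtoC 1
  | S p => Cmult (binomKR r p) (Cdiv (Cplus r (RtoC (INR (S p)))) (RtoC (INR (S p))))
  end.

Definition not_neg_int (r : C) : Prop := forall m : nat, r <> RtoC (- INR (S m)).

(* Main.v *)
Require Import Defs.
From Stdlib Require Import Reals Lia Lra.
From Coquelicot Require Import Coquelicot.


Open Scope C_scope.

Fixpoint sC (f : nat -> C) (n : nat) : C :=
  match n with O => RtoC 0 | S p => sC f p + f (S p) end.

Lemma sum_n_m_sC (f : nat -> C) n : sum_n_m f 1 n = sC f n.
Proof.
  induction n as [|n IH].
  - rewrite sum_n_m_zero; [reflexivity|lia].
  - rewrite sum_n_Sm; [|lia]. rewrite IH. reflexivity.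
Qed.

Lemma sC_ext f g n : (forall k, (1 <= k <= n)%nat -> f k = g k) -> sC f n = sC g n.
Proof.
  induction n as [|n IH]; intros H; simpl; [reflexivity|].
  rewrite IH by (intros; apply H; lia). rewrite H by lia. reflexivity.
Qed.

Lemma sC_plus f g n : sC (fun k => f k + g k) n = sC f n + sC g n.
Proof. induction n as [|n IH]; simpl; [ring|]. rewrite IH. ring. Qed.

Lemma sC_minus f g n : sC (fun k => f k - g k) n = sC f n - sC g n.
Proof. induction n as [|n IH]; simpl; [ring|]. rewrite IH. ring. Qed.

Lemma sC_scal c f n : sC (fun k => c * f k) n = c * sC f n.
Proof. induction n as [|n IH]; simpl; [ring|]. rewrite IH. ring. Qed.

Lemma sC_const0 n : sC (fun _ => RtoC 0) n = 0.
Proof. induction n as [|n IH]; simpl; [ring|]. rewrite IH. ring. Qed.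

Lemma sC_shift f n : sC f (S n) = f 1%nat + sC (fun k => f (S k)) n.
Proof.
  induction n as [|n IH]; simpl in *; [ring|]. rewrite IH. ring.
Qed.

Lemma sC_refl g n : sC (fun k => g (n - k)%nat) n = sC (fun k => g (k - 1)%nat) n.
Proof.
  revert g. induction n as [|n IH]; intros g; [reflexivity|].
  rewrite (sC_shift (fun k => g (k - 1)%nat)).
  change (sC (fun k => g (S n - k)%nat) (S n)) with
    (sC (fun k => g (S n - k)%nat) n + g (S n - S n)%nat).
  replace (S n - S n)%nat with 0%nat by lia.
  rewrite (sC_ext (fun k => g (S n - k)%nat) (fun k => (fun p => g (S p)) (n - k)%nat))
    by (intros k Hk; cbv beta; f_equal; lia).
  rewrite (IH (fun p => g (S p))).
  rewrite (sC_ext (fun k => g (S (k-1))%nat) g) by (intros k Hk; f_equal; lia).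
  rewrite (sC_ext (fun k => g (S k - 1)%nat) g) by (intros k Hk; f_equal; lia).
  replace (1 - 1)%nat with 0%nat by lia. ring.
Qed.

Definition Ck (k : nat) : C := RtoC (INR k).

Lemma Ck_S k : Ck (S k) = Ck k + 1.
Proof. unfold Ck. rewrite S_INR, <- RtoC_plus. reflexivity. Qed.

Lemma Ck_sub n k : (k <= n)%nat -> Ck (n - k) = Ck n - Ck k.
Proof. intros. unfold Ck. rewrite minus_INR by lia. apply RtoC_minus. Qed.

Lemma Ck_nz k : (1 <= k)%nat -> Ck k <> 0.
Proof.
  intros Hk E. unfold Ck in E. apply RtoC_inj in E.
  apply (not_0_INR k); [lia| exact E].
Qed.


Open Scope C_scope.

Lemma Cdiv_nz (a b : C) : a <> 0 -> b <> 0 -> a / b <> 0.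
Proof.
  intros Ha Hb E. apply Ha. replace a with (a / b * b) by (field; auto).
  rewrite E. ring.
Qed.

Lemma binomKR_nz r (hr : forall j, r + Ck j <> 0) k : binomKR r k <> 0.
Proof.
  induction k as [|k IH].
  - exact C1_nz.
  - change (binomKR r (S k)) with (binomKR r k * ((r + Ck (S k)) / Ck (S k))).
    apply Cmult_neq_0; [exact IH|]. apply Cdiv_nz.
    + apply hr.
    + apply Ck_nz; lia.
Qed.

Lemma INR_S_nz k : INR (S k) <> 0%R.
Proof. apply not_0_INR. lia. Qed.

Lemma binom_1 N : (1 <= N)%nat -> Binomial.C N 1 = INR N.
Proof.
  intros H. destruct N as [|m]; [lia|]. unfold Binomial.C.
  replace (S m - 1)%nat with m by lia.
  change (Factorial.fact (S m)) with (S m * Factorial.fact m)%nat.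
  change (Factorial.fact 1) with 1%nat.
  rewrite mult_INR. simpl (INR 1). field. apply INR_fact_neq_0.
Qed.

Lemma binom_ratio N k : (k < N)%nat ->
  (Binomial.C N (S k) * INR (S k) = Binomial.C N k * INR (N - k))%R.
Proof.
  intros H. unfold Binomial.C.
  replace (N - k)%nat with (S (N - S k)) by lia.
  change (Factorial.fact (S k)) with (S k * Factorial.fact k)%nat.
  change (Factorial.fact (S (N - S k))) with (S (N - S k) * Factorial.fact (N - S k))%nat.
  rewrite !mult_INR. field.
  repeat split; try apply INR_fact_neq_0; apply INR_S_nz.
Qed.

Lemma binom_pascal N k : (k <= N)%nat ->
  (Binomial.C (S N) k * INR (S N - k) = Binomial.C N k * INR (S N))%R.
Proof.
  intros H. unfold Binomial.C.
  replace (S N - k)%nat with (S (N - k)) by lia.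
  change (Factorial.fact (S N)) with (S N * Factorial.fact N)%nat.
  change (Factorial.fact (S (N - k))) with (S (N - k) * Factorial.fact (N - k))%nat.
  rewrite !mult_INR. field.
  repeat split; try apply INR_fact_neq_0; apply INR_S_nz.
Qed.

Ltac nzC hr := first [ apply Ck_nz; lia | exact (binomKR_nz _ hr _) | exact (hr _) ].

Definition w (r : C) (N k : nat) : C :=
  RtoC ((-1) ^ (k - 1) * Binomial.C N k)%R / binomKR r k.

Lemma w_1 r (hr : forall j, r + Ck j <> 0) N : (1 <= N)%nat -> (r + Ck 1) * w r N 1 = Ck N.
Proof.
  intros H. unfold w. change (binomKR r 1) with (RtoC 1 * ((r + Ck 1) / Ck 1)). rewrite binom_1 by exact H. simpl pow.
  unfold Ck. simpl INR. rewrite Rmult_1_l.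
  field. exact (hr 1%nat).
Qed.

Lemma w_ratio r (hr : forall j, r + Ck j <> 0) N k : (1 <= k)%nat -> (S k <= N)%nat ->
  (r + Ck (S k)) * w r N (S k) = - (Ck N - Ck k) * w r N k.
Proof.
  intros H1 H2. unfold w. change (binomKR r (S k)) with (binomKR r k * ((r + Ck (S k)) / Ck (S k))).
  rewrite <- Ck_sub by lia.
  assert (E : ((-1) ^ (S k - 1) * Binomial.C N (S k))%R =
              (- ((-1) ^ (k - 1) * Binomial.C N k) * INR (N - k) / INR (S k))%R).
  { assert (E2 : Binomial.C N (S k) = (Binomial.C N k * INR (N - k) / INR (S k))%R).
    { rewrite <- binom_ratio by lia. field. apply INR_S_nz. }
    rewrite E2. replace (S k - 1)%nat with (S (k - 1)) by lia. simpl pow. field. apply INR_S_nz. }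
  rewrite E. unfold Rdiv. rewrite !RtoC_mult, RtoC_opp, !RtoC_mult, RtoC_inv by apply INR_S_nz.
  fold (Ck (N - k)). fold (Ck (S k)).
  field. repeat split. exact (binomKR_nz _ hr _). apply Ck_nz; lia. exact (hr _).
Qed.

Lemma w_pascal r (hr : forall j, r + Ck j <> 0) N k : (1 <= k <= N)%nat ->
  w r (S N) k / Ck k = w r N k / Ck k + w r (S N) k / Ck (S N).
Proof.
  intros H. unfold w.
  assert (E : Binomial.C N k = (Binomial.C (S N) k * INR (S N - k) / INR (S N))%R).
  { rewrite binom_pascal by lia. field. apply INR_S_nz. }
  rewrite E. unfold Rdiv. rewrite !RtoC_mult, RtoC_inv by apply INR_S_nz.
  fold (Ck (S N - k)). fold (Ck (S N)). rewrite Ck_sub by lia.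
  rewrite (Ck_S N).
  field. repeat split; try (rewrite <- Ck_S); (nzC hr).
Qed.


Open Scope C_scope.

Definition G (r : C) (a : nat -> C) (N : nat) : C := sC (fun k => w r N k * a k) N.

Lemma L1_prefix r (hr : forall j, r + Ck j <> 0) (a : nat -> C) N M : (1 <= M <= N)%nat ->
  (Ck N + r) * sC (fun k => w r N k * a k) M
  - sC (fun k => w r N k * ((Ck k + r) * (a k - a (k - 1)%nat))) M
  = (Ck N - Ck M) * w r N M * a M + Ck N * a 0%nat.
Proof.
  induction M as [|M IH]; intros HM; [lia|].
  destruct (Nat.eq_dec M 0) as [->|HM0].
  - simpl sC. pose proof (w_1 r hr N ltac:(lia)) as E.
    rewrite <- E. ring.
  - specialize (IH ltac:(lia)).
    change (sC (fun k => w r N k * a k) (S M)) with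
      (sC (fun k => w r N k * a k) M + w r N (S M) * a (S M)).
    change (sC (fun k => w r N k * ((Ck k + r) * (a k - a (k - 1)%nat))) (S M)) with
      (sC (fun k => w r N k * ((Ck k + r) * (a k - a (k - 1)%nat))) M
       + w r N (S M) * ((Ck (S M) + r) * (a (S M) - a (S M - 1)%nat))).
    replace (S M - 1)%nat with M by lia.
    assert (E1 : sC (fun k => w r N k * ((Ck k + r) * (a k - a (k - 1)%nat))) M =
                 (Ck N + r) * sC (fun k => w r N k * a k) M
                 - ((Ck N - Ck M) * w r N M * a M + Ck N * a 0%nat)).
    { rewrite <- IH. ring. }
    rewrite E1.
    pose proof (w_ratio r hr N M ltac:(lia) ltac:(lia)) as E2.
    assert (E3 : w r N (S M) = - (Ck N - Ck M) * w r N M / (r + Ck (S M))).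
    { rewrite <- E2. field. exact (hr _). }
    rewrite E3. rewrite (Ck_S M). field.
    rewrite <- Ck_S. exact (hr _).
Qed.

Lemma L1 r (hr : forall j, r + Ck j <> 0) (a : nat -> C) N :
  (Ck N + r) * G r a N
  = G r (fun k => (Ck k + r) * (a k - a (k - 1)%nat)) N + Ck N * a 0%nat.
Proof.
  unfold G. destruct N as [|N].
  - simpl. unfold Ck. simpl. ring.
  - pose proof (L1_prefix r hr a (S N) (S N) ltac:(lia)) as E.
    set (s1 := sC (fun k => w r (S N) k * a k) (S N)) in *.
    set (s2 := sC (fun k => w r (S N) k * ((Ck k + r) * (a k - a (k - 1)%nat))) (S N)) in *.
    replace ((Ck (S N) + r) * s1) with (((Ck (S N) + r) * s1 - s2) + s2) by ring.
    rewrite E. ring.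
Qed.

Lemma G_ext r a b N : (forall k, (1 <= k <= N)%nat -> a k = b k) -> G r a N = G r b N.
Proof. intros H. unfold G. apply sC_ext. intros k Hk. rewrite H by exact Hk. reflexivity. Qed.

Lemma G_plus r a b N : G r (fun k => a k + b k) N = G r a N + G r b N.
Proof.
  unfold G. rewrite <- sC_plus. apply sC_ext. intros. ring.
Qed.

Lemma G_minus r a b N : G r (fun k => a k - b k) N = G r a N - G r b N.
Proof.
  unfold G. rewrite <- sC_minus. apply sC_ext. intros. ring.
Qed.

Lemma G_scal r c a N : G r (fun k => c * a k) N = c * G r a N.
Proof.
  unfold G. rewrite <- sC_scal. apply sC_ext. intros. ring.
Qed.

Lemma L2 r (hr : forall j, r + Ck j <> 0) (b : nat -> C) N :
  G r (fun k => b k / Ck k) (S N) = G r (fun k => b k / Ck k) N + G r b (S N) / Ck (S N).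
Proof.
  unfold G.
  change (sC (fun k => w r (S N) k * (b k / Ck k)) (S N)) with
    (sC (fun k => w r (S N) k * (b k / Ck k)) N + w r (S N) (S N) * (b (S N) / Ck (S N))).
  change (sC (fun k => w r (S N) k * b k) (S N)) with
    (sC (fun k => w r (S N) k * b k) N + w r (S N) (S N) * b (S N)).
  rewrite (sC_ext (fun k => w r (S N) k * (b k / Ck k))
                  (fun k => w r N k * (b k / Ck k) + / Ck (S N) * (w r (S N) k * b k))).
  2:{ intros k Hk.
      replace (w r (S N) k * (b k / Ck k)) with (w r (S N) k / Ck k * b k)
        by (field; apply Ck_nz; lia).
      rewrite w_pascal by (exact hr || lia). field. split; apply Ck_nz; lia. }
  rewrite sC_plus, sC_scal. field. apply Ck_nz; lia.
Qed.


Open Scope C_scope.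

Definition Hc (k : nat) : C := RtoC (Harm k).

Lemma Hc_S k : Hc (S k) = Hc k + / Ck (S k).
Proof. unfold Hc, Ck. simpl Harm. rewrite RtoC_plus, RtoC_inv by apply INR_S_nz. reflexivity. Qed.

Lemma Hc_0 : Hc 0 = 0.
Proof. reflexivity. Qed.

Lemma Hc_pred k : (1 <= k)%nat -> Hc (k - 1)%nat = Hc k - / Ck k.
Proof. intros H. destruct k as [|k]; [lia|]. rewrite Hc_S. replace (S k - 1)%nat with k by lia. ring. Qed.

Definition Sr (r : C) (m : nat) : C := sC (fun j => / (r + Ck j)) m.

Lemma hr' r (hr : forall j, r + Ck j <> 0) N : Ck N + r <> 0.
Proof. intros E. apply (hr N). rewrite <- E. ring. Qed.

Ltac nz hr := repeat split; first [ apply Ck_nz; lia | exact (binomKR_nz _ hr _) | exact (hr _) | exact (hr' _ hr _)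
   | (rewrite <- Ck_S; first [ apply Ck_nz; lia | exact (hr _) | exact (hr' _ hr _)]) ].

Lemma Cmult_reg_l (c x y : C) : c <> 0 -> c * x = c * y -> x = y.
Proof.
  intros Hc E. replace x with (/ c * (c * x)) by (field; exact Hc).
  rewrite E. field. exact Hc.
Qed.

Lemma F1 r (hr : forall j, r + Ck j <> 0) N : G r (fun _ => RtoC 1) N = Ck N / (Ck N + r).
Proof.
  pose proof (L1 r hr (fun _ => RtoC 1) N) as E. cbv beta in E.
  rewrite (G_ext r (fun k => (Ck k + r) * (RtoC 1 - RtoC 1)) (fun k => RtoC 0 * RtoC 1)) in E by (intros; ring).
  rewrite G_scal in E.
  apply (Cmult_reg_l (Ck N + r)); [apply hr' ; exact hr|].
  rewrite E. field. apply hr'; exact hr.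
Qed.

Lemma F2 r (hr : forall j, r + Ck j <> 0) N : G r (fun k => RtoC 1 / Ck k) N = Sr r N.
Proof.
  induction N as [|N IH].
  - reflexivity.
  - pose proof (L2 r hr (fun _ => RtoC 1) N) as E. cbv beta in E.
    rewrite E, IH, F1 by exact hr. unfold Sr. simpl sC. fold (Sr r N).
    field. nz hr.
Qed.

Definition GHc (r : C) (m : nat) : C := (Ck m / (Ck m + r) + r * Sr r m) / (Ck m + r).

Lemma F3 r (hr : forall j, r + Ck j <> 0) N : G r Hc N = GHc r N.
Proof.
  unfold GHc.
  pose proof (L1 r hr Hc N) as E.
  rewrite (G_ext r (fun k => (Ck k + r) * (Hc k - Hc (k - 1)%nat))
                  (fun k => RtoC 1 + r * (RtoC 1 / Ck k))) in E.
  2:{ intros k Hk. rewrite Hc_pred by lia. field. apply Ck_nz; lia. }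
  rewrite G_plus, G_scal, F1, F2 in E by exact hr.
  apply (Cmult_reg_l (Ck N + r)); [apply hr' ; exact hr|].
  rewrite E, Hc_0. field. apply hr'; exact hr.
Qed.

Definition A4 (r : C) (N : nat) : C := sC (fun m => GHc r m / Ck m) N.
Definition A5 (r : C) (N : nat) : C := sC (fun m => Sr r m / Ck m) N.

Lemma F4 r (hr : forall j, r + Ck j <> 0) N : G r (fun k => Hc k / Ck k) N = A4 r N.
Proof.
  induction N as [|N IH].
  - reflexivity.
  - rewrite (L2 r hr Hc N), IH, F3 by exact hr. reflexivity.
Qed.

Lemma F5 r (hr : forall j, r + Ck j <> 0) N : G r (fun k => RtoC 1 / Ck k / Ck k) N = A5 r N.
Proof.
  induction N as [|N IH].
  - reflexivity.
  - rewrite (L2 r hr (fun k => RtoC 1 / Ck k) N), IH, F2 by exact hr. reflexivity.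
Qed.

Lemma F6 r (hr : forall j, r + Ck j <> 0) N :
  (Ck N + r) * G r (fun k => Hc k * Hc k) N
  = 2 * GHc r N - Sr r N + r * (2 * A4 r N - A5 r N).
Proof.
  rewrite (L1 r hr).
  rewrite (G_ext r (fun k => (Ck k + r) * (Hc k * Hc k - Hc (k - 1)%nat * Hc (k - 1)%nat))
             (fun k => (2 * Hc k - RtoC 1 / Ck k) + r * (2 * (Hc k / Ck k) - RtoC 1 / Ck k / Ck k))).
  2:{ intros k Hk. rewrite Hc_pred by lia. field. apply Ck_nz; lia. }
  rewrite G_plus, G_minus, G_scal, G_scal, G_minus, G_scal.
  rewrite F3, F2, F4, F5 by exact hr.
  rewrite Hc_0. ring.
Qed.


Open Scope R_scope.

Lemma telescope (a : nat -> R) : is_lim_seq a 0 -> is_series (fun n => a n - a (S n)) (a O).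
Proof.
  intros Ha.
  assert (E : forall N, sum_n (fun n => a n - a (S n)) N = a O - a (S N)).
  { induction N as [|N IH].
    - rewrite sum_O. reflexivity.
    - rewrite sum_Sn, IH. unfold plus. simpl. ring. }
  assert (L : is_lim_seq (fun N => a O - a (S N)) (a O)).
  { pose proof (proj1 (is_lim_seq_incr_1 a 0) Ha) as H'.
    pose proof (is_lim_seq_minus' _ _ (a O) 0 (is_lim_seq_const (a O)) H') as H2.
    rewrite Rminus_0_r in H2. exact H2. }
  apply (is_lim_seq_ext _ (sum_n (fun n => a n - a (S n)))) in L.
  - exact L.
  - intros N. rewrite E. reflexivity.
Qed.

Lemma inv_INR_lim (c : R) (n0 : nat) : is_lim_seq (fun j => c / (INR (n0 + j) + 1)) 0.
Proof.
  assert (H1 : is_lim_seq (fun j => INR (n0 + j) + 1) p_infty).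
  { apply (is_lim_seq_le_p_loc (fun j => INR j)).
    - exists O. intros j _. rewrite plus_INR. pose proof (pos_INR n0). lra.
    - apply is_lim_seq_INR. }
  apply is_lim_seq_inv in H1; [|discriminate].
  apply (is_lim_seq_scal_l _ c) in H1. simpl in H1.
  replace 0 with (c * 0) by ring. exact H1.
Qed.

Lemma Hterm_bound (z : C) (j : nat) : 2 * Cmod z <= INR j ->
  Cmod (Hterm z j) <= 4 * Cmod z * (/ (INR j + 1) - / (INR (S j) + 1)).
Proof.
  intros Hj. unfold Hterm. rewrite S_INR.
  set (a := INR j + 1). set (m := Cmod z) in *.
  assert (Haj : a = INR j + 1) by reflexivity.
  clearbody a. pose proof (pos_INR j).
  assert (Ha : 1 <= a) by lra.
  assert (Hm : 0 <= m) by apply Cmod_ge_0.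
  assert (Hd : a - m <= Cmod (RtoC a + z)).
  { pose proof (Cmod_triangle (RtoC a + z) (- z)) as T.
    replace (RtoC a + z + - z)%C with (RtoC a) in T by ring.
    rewrite Cmod_opp, Cmod_R, Rabs_pos_eq in T by lra. fold m in T. lra. }
  set (d := Cmod (RtoC a + z)) in *.
  assert (Hd2 : (a + 1) / 2 <= d) by lra.
  assert (Hnz : (RtoC a + z)%C <> 0%C).
  { intros E. unfold d in Hd2. rewrite E, Cmod_0 in Hd2. lra. }
  assert (Hanz : RtoC a <> 0%C).
  { intros E. apply RtoC_inj in E. lra. }
  rewrite Cmod_div by (apply Cmult_neq_0; assumption).
  rewrite Cmod_mult, Cmod_R, Rabs_pos_eq by lra. fold m d.
  replace (/ a - / (a + 1)) with (/ (a * (a + 1))) by (field; lra).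
  unfold Rdiv. replace (4 * m * / (a * (a + 1))) with (m * (4 * / (a * (a + 1)))) by ring.
  apply Rmult_le_compat_l; [exact Hm|].
  replace (4 * / (a * (a + 1))) with (/ (a * (a + 1) / 4)) by (field; lra).
  apply Rinv_le_contravar.
  - apply Rmult_lt_0_compat; [|lra]. apply Rmult_lt_0_compat; lra.
  - replace (a * (a + 1) / 4) with (a * ((a + 1) / 4)) by (unfold Rdiv; ring).
    apply Rmult_le_compat_l; lra.
Qed.

Lemma ex_series_Cmod_Hterm (z : C) : ex_series (fun j => Cmod (Hterm z j)).
Proof.
  destruct (INR_unbounded (2 * Cmod z)) as [n0 Hn0].
  apply (ex_series_incr_n _ n0).
  apply (@ex_series_le R_AbsRing R_CompleteNormedModule _ (fun k => 4 * Cmod z / (INR (n0 + k) + 1) - 4 * Cmod z / (INR (n0 + S k) + 1))).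
  - intros k. unfold norm; simpl. unfold abs; simpl.
    rewrite Rabs_pos_eq by apply Cmod_ge_0.
    replace (4 * Cmod z / (INR (n0 + k) + 1) - 4 * Cmod z / (INR (n0 + S k) + 1))
      with (4 * Cmod z * (/ (INR (n0 + k) + 1) - / (INR (S (n0 + k)) + 1))).
    + apply Hterm_bound. rewrite plus_INR. pose proof (pos_INR k). lra.
    + replace (n0 + S k)%nat with (S (n0 + k)) by lia. unfold Rdiv. ring.
  - eexists. apply (telescope (fun k => 4 * Cmod z / (INR (n0 + k) + 1))).
    apply inv_INR_lim.
Qed.

Lemma ex_series_Re_Hterm (z : C) : ex_series (fun j => Re (Hterm z j)).
Proof.
  apply (@ex_series_le R_AbsRing R_CompleteNormedModule _ (fun j => Cmod (Hterm z j))); [|apply ex_series_Cmod_Hterm].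
  intros j. apply re_le_Cmod.
Qed.

Lemma ex_series_Im_Hterm (z : C) : ex_series (fun j => Im (Hterm z j)).
Proof.
  apply (@ex_series_le R_AbsRing R_CompleteNormedModule _ (fun j => Cmod (Hterm z j))); [|apply ex_series_Cmod_Hterm].
  intros j. eapply Rle_trans; [|apply Rmax_Cmod]. apply Rmax_r.
Qed.

Open Scope C_scope.

Lemma re_minus (a b : C) : Re (a - b) = (Re a - Re b)%R.
Proof. destruct a, b. simpl. ring. Qed.
Lemma im_minus (a b : C) : Im (a - b) = (Im a - Im b)%R.
Proof. destruct a, b. simpl. ring. Qed.
Lemma im_plus (a b : C) : Im (a + b) = (Im a + Im b)%R.
Proof. destruct a, b. simpl. ring. Qed.

Lemma lim_minus0 (u v : nat -> R) : is_lim_seq u 0%R -> is_lim_seq v 0%R ->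
  is_lim_seq (fun n => (u n - v n)%R) 0%R.
Proof.
  intros Hu Hv. pose proof (is_lim_seq_minus' _ _ _ _ Hu Hv) as H.
  rewrite Rminus_0_r in H. exact H.
Qed.

Lemma nni_nz z (hz : not_neg_int z) j : RtoC (INR (S j)) + z <> 0.
Proof.
  intros E. apply (hz j). rewrite RtoC_opp.
  replace z with (RtoC (INR (S j)) + z - RtoC (INR (S j))) by ring.
  rewrite E. ring.
Qed.

Lemma HarmC_succ z : not_neg_int z -> HarmC (z + 1) = HarmC z + / (z + 1).
Proof.
  intros hz.
  set (t := fun j => / (RtoC (INR (S j)) + z)).
  assert (Key : forall j, Hterm (z + 1) j = Hterm z j + (t j - t (S j))).
  { intros j. unfold Hterm, t. rewrite (S_INR (S j)), RtoC_plus.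
    pose proof (nni_nz z hz j) as N1. pose proof (nni_nz z hz (S j)) as N2.
    rewrite (S_INR (S j)), RtoC_plus in N2.
    assert (N3 : RtoC (INR (S j)) <> 0) by (intros E; apply RtoC_inj in E; apply (INR_S_nz j); exact E).
    field. repeat split; try assumption.
    all: replace (RtoC (INR (S j)) + (z + 1)) with (RtoC (INR (S j)) + 1 + z) by ring; exact N2. }
  assert (Tdef : forall j, t j = / RtoC (INR (S j)) - Hterm z j).
  { intros j. unfold Hterm, t.
    pose proof (nni_nz z hz j) as N1.
    assert (N3 : RtoC (INR (S j)) <> 0) by (intros E; apply RtoC_inj in E; apply (INR_S_nz j); exact E).
    field. split; assumption. }
  assert (Lre : is_lim_seq (fun j => Re (t j)) 0%R).
  { apply (is_lim_seq_ext (fun j => (1 / (INR (0 + j) + 1) - Re (Hterm z j))%R)).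
    - intros j. rewrite Tdef, re_minus, <- RtoC_inv by apply INR_S_nz. rewrite re_RtoC.
      rewrite S_INR. simpl (0 + j)%nat. unfold Rdiv. ring.
    - apply lim_minus0.
      + apply inv_INR_lim.
      + apply ex_series_lim_0. apply ex_series_Re_Hterm. }
  assert (Lim : is_lim_seq (fun j => Im (t j)) 0%R).
  { apply (is_lim_seq_ext (fun j => (0 - Im (Hterm z j))%R)).
    - intros j. rewrite Tdef, im_minus, <- RtoC_inv by apply INR_S_nz. rewrite im_RtoC. ring.
    - apply lim_minus0.
      + apply is_lim_seq_const.
      + apply ex_series_lim_0. apply ex_series_Im_Hterm. }
  assert (SRe : Series (fun j => Re (Hterm (z + 1) j)) = (Series (fun j => Re (Hterm z j)) + Re (t O))%R).
  { apply is_series_unique.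
    pose proof (is_series_plus _ _ _ _ (Series_correct _ (ex_series_Re_Hterm z))
                  (telescope (fun j => Re (t j)) Lre)) as P.
    eapply is_series_ext; [|exact P].
    intros n. rewrite Key, re_plus, re_minus. reflexivity. }
  assert (SIm : Series (fun j => Im (Hterm (z + 1) j)) = (Series (fun j => Im (Hterm z j)) + Im (t O))%R).
  { apply is_series_unique.
    pose proof (is_series_plus _ _ _ _ (Series_correct _ (ex_series_Im_Hterm z))
                  (telescope (fun j => Im (t j)) Lim)) as P.
    eapply is_series_ext; [|exact P].
    intros n. rewrite Key, im_plus, im_minus. reflexivity. }
  assert (T0 : t O = / (z + 1)).
  { unfold t. simpl INR. f_equal. ring. }
  rewrite <- T0.
  unfold HarmC. rewrite SRe, SIm.
  apply injective_projections; simpl; reflexivity.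
Qed.


Open Scope C_scope.

Lemma hr_of r : not_neg_int r -> r <> 0 -> forall j, r + Ck j <> 0.
Proof.
  intros hn h0 j E. destruct j as [|j].
  - apply h0. rewrite <- E. unfold Ck. simpl. ring.
  - apply (hn j). rewrite RtoC_opp. fold (Ck (S j)).
    replace r with (r + Ck (S j) - Ck (S j)) by ring. rewrite E. ring.
Qed.

Lemma Ck_add a b : Ck (a + b) = Ck a + Ck b.
Proof. unfold Ck. rewrite plus_INR, RtoC_plus. reflexivity. Qed.

Lemma HarmC_shift r (hr : forall j, r + Ck j <> 0) m : HarmC (Ck m + r) = HarmC r + Sr r m.
Proof.
  induction m as [|m IH].
  - replace (Ck 0 + r) with r by (unfold Ck; simpl; ring). unfold Sr. simpl. ring.
  - replace (Ck (S m) + r) with ((Ck m + r) + 1) by (rewrite Ck_S; ring).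
    rewrite HarmC_succ.
    + rewrite IH. unfold Sr. simpl sC. rewrite Ck_S.
      replace (Ck m + r + 1) with (r + (Ck m + 1)) by ring. ring.
    + intros j E. apply (hr (m + S j)%nat). rewrite Ck_add.
      replace (r + (Ck m + Ck (S j))) with ((Ck m + r) + Ck (S j)) by ring.
      rewrite E, RtoC_opp. unfold Ck. ring.
Qed.

Lemma HarmC_shift1 r (hr : forall j, r + Ck j <> 0) m :
  HarmC (Ck m + r - 1) = HarmC r + Sr r m - / (r + Ck m).
Proof.
  assert (nn : not_neg_int (Ck m + r - 1)).
  { intros j E. apply (hr (m + j)%nat). rewrite Ck_add.
    replace (r + (Ck m + Ck j)) with ((Ck m + r - 1) + (Ck j + 1)) by ring.
    rewrite E, RtoC_opp, <- Ck_S. unfold Ck. ring. }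
  pose proof (HarmC_succ _ nn) as E.
  replace (Ck m + r - 1 + 1) with (Ck m + r) in E by ring.
  rewrite HarmC_shift in E by exact hr.
  rewrite E. replace (Ck m + r) with (r + Ck m) by ring. ring.
Qed.

Definition fr (r : C) (p : nat) : C := Sr r p - / (r + Ck p).
Definition Uu (r : C) (n : nat) : C := sC (fun k => / (r + Ck (k - 1)%nat)) n.
Definition Conv (r : C) (n : nat) : C := sC (fun k => fr r (n - k)%nat / Ck k) n.
Definition Pp (r : C) (n : nat) : C := sC (fun k => fr r (k - 1)%nat / (Ck (k - 1)%nat + r)) n.
Definition Vv (r : C) (n : nat) : C := sC (fun k => RtoC 1 / (Ck k * (Ck (n - k)%nat + r))) n.

Lemma Ck_0 : Ck 0 = 0.
Proof. unfold Ck. reflexivity. Qed.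

Lemma U_rel r n : Uu r n + / (r + Ck n) = / r + Sr r n.
Proof.
  induction n as [|n IH].
  - unfold Uu, Sr. simpl sC. rewrite Ck_0. replace (r + 0) with r by ring. ring.
  - unfold Uu, Sr in *. simpl sC.
    rewrite Nat.sub_0_r, IH. ring.
Qed.

Lemma Hc_sC n : Hc n = sC (fun k => RtoC 1 / Ck k) n.
Proof.
  induction n as [|n IH]; [reflexivity|].
  rewrite Hc_S, IH. simpl. unfold Cdiv. ring.
Qed.

Lemma PF r (hr : forall j, r + Ck j <> 0) (g : nat -> C) n :
  sC (fun k => g (n - k)%nat / (Ck k * (Ck (n - k)%nat + r))) n
  = (sC (fun k => g (n - k)%nat / Ck k) n
     + sC (fun k => g (k - 1)%nat / (Ck (k - 1)%nat + r)) n) / (Ck n + r).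
Proof.
  rewrite <- (sC_refl (fun p => g p / (Ck p + r)) n).
  rewrite (sC_ext _ (fun k => / (Ck n + r) * (g (n - k)%nat / Ck k + g (n - k)%nat / (Ck (n - k)%nat + r)))).
  - rewrite sC_scal, sC_plus. field. apply hr'; exact hr.
  - intros k Hk.
    assert (E : Ck n = Ck (n - k)%nat + Ck k) by (rewrite Ck_sub by lia; ring).
    assert (N1 : Ck k <> 0) by (apply Ck_nz; lia).
    assert (N2 : Ck (n - k)%nat + r <> 0) by (apply hr'; exact hr).
    assert (N3 : Ck (n - k)%nat + Ck k + r <> 0) by (rewrite <- E; apply hr'; exact hr).
    rewrite E. field. repeat split; assumption.
Qed.

Lemma Vv_closed r (hr : forall j, r + Ck j <> 0) n : Vv r n = (Hc n + Uu r n) / (Ck n + r).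
Proof.
  unfold Vv. rewrite (PF r hr (fun _ => RtoC 1) n).
  rewrite <- Hc_sC. f_equal. f_equal. unfold Uu. apply sC_ext. intros k Hk.
  rewrite Cplus_comm. unfold Cdiv. ring.
Qed.

Lemma fr_S r p : fr r (S p) = fr r p + / (r + Ck p).
Proof. unfold fr, Sr. simpl sC. ring. Qed.

Lemma Conv_S r (hr : forall j, r + Ck j <> 0) n :
  Conv r (S n) = Conv r n + Vv r n + fr r 0 / Ck (S n).
Proof.
  unfold Conv. simpl sC at 1. replace (S n - S n)%nat with 0%nat by lia.
  rewrite (sC_ext (fun k => fr r (S n - k)%nat / Ck k)
             (fun k => fr r (n - k)%nat / Ck k + RtoC 1 / (Ck k * (Ck (n - k)%nat + r)))).
  - rewrite sC_plus. unfold Vv. rewrite Nat.sub_diag. ring.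
  - intros k Hk. replace (S n - k)%nat with (S (n - k)) by lia. rewrite fr_S.
    assert (N1 : Ck k <> 0) by (apply Ck_nz; lia).
    assert (N2 : Ck (n - k)%nat + r <> 0) by (apply hr'; exact hr).
    assert (N3 : r + Ck (n - k)%nat <> 0) by (apply hr).
    field. repeat split; assumption.
Qed.

Lemma Pp_S r n : Pp r (S n) = Pp r n + fr r n / (Ck n + r).
Proof. unfold Pp. simpl sC. rewrite Nat.sub_0_r. reflexivity. Qed.

Lemma W_closed r (hr : forall j, r + Ck j <> 0) n :
  sC (fun k => fr r (n - k)%nat / (Ck k * (Ck (n - k)%nat + r))) n = (Conv r n + Pp r n) / (Ck n + r).
Proof. apply PF. exact hr. Qed.

Definition Zexpr (r : C) (n : nat) : C :=
  2 * GHc r n + r * (2 * A4 r n - A5 r n) + Ck n / (r * (Ck n + r))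
  - r * Hc n * (Sr r n - / (Ck n + r)) + r * (Conv r n + Pp r n).

Lemma A4_S r n : A4 r (S n) = A4 r n + GHc r (S n) / Ck (S n).
Proof. reflexivity. Qed.
Lemma A5_S r n : A5 r (S n) = A5 r n + Sr r (S n) / Ck (S n).
Proof. reflexivity. Qed.
Lemma Sr_S r n : Sr r (S n) = Sr r n + / (r + Ck (S n)).
Proof. reflexivity. Qed.

Lemma Zn r (hr : forall j, r + Ck j <> 0) (r0 : r <> 0) n : Zexpr r n = 0.
Proof.
  induction n as [|n IH].
  - unfold Zexpr, GHc, A4, A5, Conv, Pp. simpl sC. rewrite Hc_0.
    unfold Sr. simpl sC. rewrite Ck_0. field. exact r0.
  - transitivity (Zexpr r n); [|exact IH].
    unfold Zexpr.
    rewrite A4_S, A5_S, Conv_S, Pp_S, Hc_S, Vv_closed by exact hr.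
    unfold GHc. rewrite !Sr_S.
    assert (EU : Uu r n = / r + Sr r n - / (r + Ck n)) by (rewrite <- (U_rel r n); ring).
    rewrite EU. unfold fr. rewrite Ck_0.
    replace (Sr r 0) with (RtoC 0) by reflexivity. replace (r + 0) with r by ring.
    rewrite Ck_S.
    assert (N1 : Ck n + r <> 0) by (apply hr'; exact hr).
    assert (N2 : r + Ck n <> 0) by (apply hr).
    assert (N3 : r + (Ck n + 1) <> 0) by (rewrite <- Ck_S; apply hr).
    assert (N4 : Ck n + 1 + r <> 0) by (rewrite <- Ck_S; apply hr'; exact hr).
    assert (N5 : Ck n + 1 <> 0) by (rewrite <- Ck_S; apply Ck_nz; lia).
    field. repeat split; assumption.
Qed.


Open Scope R_scope.

Lemma part1 :
  (forall (n : nat) (r : C), not_neg_int r -> r <> RtoC 0 ->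
     let N := RtoC (INR n) in
     sum_n_m (fun k => Cmult (RtoC ((-1) ^ (k - 1) * Binomial.C n k))
                        (Cdiv (Cmult (RtoC (Harm k)) (RtoC (Harm k))) (binomKR r k))) 1 n
     = Cplus (Cplus (Cplus
         (Cmult (Cdiv (RtoC 1) (Cplus N r))
                (Cmult (Cminus (HarmC (Cplus N r)) (HarmC r))
                       (Cminus (Cmult r (HarmC r)) (RtoC 1))))
         (Cmult (Cdiv N (Cmult (Cplus N r) (Cplus N r)))
                (Cminus (HarmC r) (Cdiv (RtoC 1) r))))
         (Cmult (Cdiv r (Cplus N r))
                (Cmult (RtoC (Harm n)) (HarmC (Cminus (Cplus N r) (RtoC 1))))))
       (Copp (Cmult r
         (sum_n_m (fun k =>
            Cdiv (HarmC (Cminus (Cplus (RtoC (INR (n - k))) r) (RtoC 1)))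
                 (Cmult (RtoC (INR k)) (Cplus (RtoC (INR (n - k))) r))) 1 n)))).
Proof.
  Local Open Scope C_scope.
  intros n r hn r0 N. change N with (Ck n). clear N.
  pose proof (hr_of r hn r0) as hr.
  rewrite !sum_n_m_sC.
  rewrite (sC_ext _ (fun k => w r n k * (Hc k * Hc k))).
  2:{ intros k Hk. unfold w, Hc. field. exact (binomKR_nz _ hr _). }
  change (sC (fun k => w r n k * (Hc k * Hc k)) n) with (G r (fun k => Hc k * Hc k) n).
  rewrite (sC_ext _ (fun k => HarmC r * (RtoC 1 / (Ck k * (Ck (n - k)%nat + r)))
                              + fr r (n - k)%nat / (Ck k * (Ck (n - k)%nat + r)))).
  2:{ intros k Hk.
      change (HarmC (Cminus (Cplus (RtoC (INR (n - k))) r) (RtoC 1))) with (HarmC (Ck (n - k)%nat + r - 1)).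
      rewrite HarmC_shift1 by exact hr. unfold fr.
      change (RtoC (INR k)) with (Ck k). change (RtoC (INR (n - k))) with (Ck (n - k)%nat).
      assert (N1 : Ck k <> 0) by (apply Ck_nz; lia).
      assert (N2 : Ck (n - k)%nat + r <> 0) by (apply hr'; exact hr).
      assert (N3 : r + Ck (n - k)%nat <> 0) by (apply hr).
      field. repeat split; assumption. }
  rewrite sC_plus, sC_scal.
  change (sC (fun k => RtoC 1 / (Ck k * (Ck (n - k)%nat + r))) n) with (Vv r n).
  rewrite W_closed, Vv_closed by exact hr.
  change (HarmC (Cplus (Ck n) r)) with (HarmC (Ck n + r)).
  change (HarmC (Cminus (Cplus (Ck n) r) (RtoC 1))) with (HarmC (Ck n + r - 1)).
  rewrite HarmC_shift1, HarmC_shift by exact hr.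
  change (RtoC (Harm n)) with (Hc n).
  assert (EU : Uu r n = / r + Sr r n - / (r + Ck n)) by (rewrite <- (U_rel r n); ring).
  rewrite EU.
  assert (N1 : Ck n + r <> 0) by (apply hr'; exact hr).
  assert (N2 : r + Ck n <> 0) by (apply hr).
  assert (EC : Conv r n = (- (2 * GHc r n + r * (2 * A4 r n - A5 r n) + Ck n / (r * (Ck n + r))
                  - r * Hc n * (Sr r n - / (Ck n + r)))) / r - Pp r n).
  { pose proof (Zn r hr r0 n) as Z. unfold Zexpr in Z.
    apply Ceq_minus.
    match goal with |- ?L = _ => replace L with ((2 * GHc r n + r * (2 * A4 r n - A5 r n) + Ck n / (r * (Ck n + r))
                  - r * Hc n * (Sr r n - / (Ck n + r)) + r * (Conv r n + Pp r n)) / r) by (field; split; assumption) end.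
    rewrite Z. unfold Cdiv. ring. }
  rewrite EC.
  assert (EG : G r (fun k => Hc k * Hc k) n
               = (2 * GHc r n - Sr r n + r * (2 * A4 r n - A5 r n)) / (Ck n + r)).
  { apply (Cmult_reg_l (Ck n + r)); [exact N1|]. rewrite F6 by exact hr. field. exact N1. }
  rewrite EG. unfold GHc.
  match goal with |- ?a = ?b => change (@eq C a b) end.
  field. repeat split; assumption.
Qed.


Open Scope C_scope.

Lemma sum_n_m_R_sC (f : nat -> R) n : RtoC (sum_n_m f 1 n) = sC (fun k => RtoC (f k)) n.
Proof.
  induction n as [|n IH].
  - rewrite sum_n_m_zero; [reflexivity|lia].
  - rewrite sum_n_Sm; [|lia]. simpl sC. rewrite <- IH.
    change (plus (sum_n_m f 1 n) (f (S n))) with (sum_n_m f 1 n + f (S n))%R.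
    apply RtoC_plus.
Qed.

Lemma binomKR_1 k : binomKR (RtoC 1) k = Ck k + 1.
Proof.
  induction k as [|k IH].
  - simpl. rewrite Ck_0. ring.
  - change (binomKR (RtoC 1) (S k)) with (binomKR (RtoC 1) k * ((RtoC 1 + Ck (S k)) / Ck (S k))).
    rewrite IH. rewrite Ck_S. field.
    rewrite <- Ck_S. apply Ck_nz. lia.
Qed.

Lemma hr1 : forall j, RtoC 1 + Ck j <> 0.
Proof.
  intros j E. unfold Ck in E. rewrite <- RtoC_plus in E. apply RtoC_inj in E.
  pose proof (pos_INR j). lra.
Qed.

Definition H2c (k : nat) : C := RtoC (Harm2 k).

Lemma H2c_S k : H2c (S k) = H2c k + / (Ck (S k) * Ck (S k)).
Proof.
  unfold H2c, Ck. change (Harm2 (S k)) with (Harm2 k + / (INR (S k) ^ 2))%R. rewrite RtoC_plus, RtoC_inv.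
  - rewrite RtoC_pow. simpl. rewrite Cmult_1_r. reflexivity.
  - apply pow_nonzero. apply INR_S_nz.
Qed.

Lemma Sr1 n : Sr (RtoC 1) n = Hc n + / (Ck n + 1) - 1.
Proof.
  induction n as [|n IH].
  - rewrite Hc_0, Ck_0. unfold Sr. simpl sC. field.
  - rewrite Sr_S, IH, Hc_S, Ck_S.
    assert (N1 : Ck n + 1 <> 0) by (rewrite <- Ck_S; apply Ck_nz; lia).
    assert (N2 : RtoC 1 + (Ck n + 1) <> 0) by (rewrite <- Ck_S; apply hr1).
    assert (N3 : Ck n + 1 + 1 <> 0) by (rewrite <- !Ck_S; apply Ck_nz; lia).
    field. repeat split; assumption.
Qed.

Definition Z2expr (n : nat) : C :=
  2 * (2 * GHc (RtoC 1) n - Sr (RtoC 1) n + (2 * A4 (RtoC 1) n - A5 (RtoC 1) n))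
  - (3 * H2c n - Hc n * Hc n).

Lemma Z2 n : Z2expr n = 0.
Proof.
  induction n as [|n IH].
  - unfold Z2expr, GHc, A4, A5. simpl sC. rewrite Hc_0. unfold Sr, H2c. simpl sC. simpl Harm2.
    rewrite Ck_0. field.
  - transitivity (Z2expr n); [|exact IH].
    unfold Z2expr. rewrite A4_S, A5_S, Hc_S, H2c_S. unfold GHc. rewrite !Sr_S, !Sr1.
    rewrite Ck_S.
    assert (N1 : Ck n + 1 <> 0) by (rewrite <- Ck_S; apply Ck_nz; lia).
    assert (N2 : RtoC 1 + (Ck n + 1) <> 0) by (rewrite <- Ck_S; apply hr1).
    assert (N3 : Ck n + 1 + 1 <> 0) by (rewrite <- !Ck_S; apply Ck_nz; lia).
    assert (N4 : Ck n + 1 + RtoC 1 <> 0) by (rewrite <- !Ck_S; apply Ck_nz; lia).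
    assert (N5 : Ck n + RtoC 1 <> 0) by (rewrite <- !Ck_S; apply Ck_nz; lia).
    field. repeat split; assumption.
Qed.

Open Scope R_scope.
Lemma part2 :
  (forall n : nat,
     sum_n_m (fun k => (-1) ^ (k - 1) * Binomial.C n k / (INR k + 1) * (Harm k) ^ 2) 1 n
     = / (2 * (INR n + 1)) * (3 * Harm2 n - (Harm n) ^ 2)).
Proof.
  intros n. apply RtoC_inj. rewrite sum_n_m_R_sC.
  Local Open Scope C_scope.
  rewrite (sC_ext _ (fun k => w (RtoC 1) n k * (Hc k * Hc k))).
  2:{ intros k Hk. unfold w, Hc. rewrite binomKR_1.
      assert (N1 : Ck k + 1 <> 0) by (rewrite <- Ck_S; apply Ck_nz; lia).
      assert (N2 : (INR k + 1)%R <> 0%R) by (rewrite <- S_INR; apply INR_S_nz).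
      unfold Rdiv. rewrite !RtoC_mult, RtoC_inv, !RtoC_pow, RtoC_plus by exact N2.
      fold (Ck k). field. exact N1. }
  change (sC (fun k => w (RtoC 1) n k * (Hc k * Hc k)) n) with (G (RtoC 1) (fun k => Hc k * Hc k) n).
  assert (N1 : Ck n + RtoC 1 <> 0) by (apply hr'; exact hr1).
  assert (EG : G (RtoC 1) (fun k => Hc k * Hc k) n
               = (2 * GHc (RtoC 1) n - Sr (RtoC 1) n + RtoC 1 * (2 * A4 (RtoC 1) n - A5 (RtoC 1) n)) / (Ck n + RtoC 1)).
  { apply (Cmult_reg_l (Ck n + RtoC 1)); [exact N1|]. rewrite F6 by exact hr1. field. exact N1. }
  rewrite EG.
  assert (N2 : (2 * (INR n + 1))%R <> 0%R) by (pose proof (pos_INR n); lra).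
  rewrite RtoC_mult, RtoC_inv by exact N2.
  rewrite RtoC_minus, !RtoC_mult, RtoC_plus, RtoC_pow.
  fold (Ck n). fold (H2c n). fold (Hc n).
  pose proof (Z2 n) as Z. unfold Z2expr in Z.
  apply Ceq_minus.
  match goal with |- ?L = _ => replace L with (Z2expr n / (2 * (Ck n + RtoC 1))) end.
  - rewrite Z2. unfold Cdiv. ring.
  - unfold Z2expr. field. exact N1.
Qed.


Open Scope R_scope.

Theorem corollary12 :
  (forall (n : nat) (r : C), not_neg_int r -> r <> RtoC 0 ->
     let N := RtoC (INR n) in
     sum_n_m (fun k => Cmult (RtoC ((-1) ^ (k - 1) * Binomial.C n k))
                        (Cdiv (Cmult (RtoC (Harm k)) (RtoC (Harm k))) (binomKR r k))) 1 n
     = Cplus (Cplus (Cplus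
         (Cmult (Cdiv (RtoC 1) (Cplus N r))
                (Cmult (Cminus (HarmC (Cplus N r)) (HarmC r))
                       (Cminus (Cmult r (HarmC r)) (RtoC 1))))
         (Cmult (Cdiv N (Cmult (Cplus N r) (Cplus N r)))
                (Cminus (HarmC r) (Cdiv (RtoC 1) r))))
         (Cmult (Cdiv r (Cplus N r))
                (Cmult (RtoC (Harm n)) (HarmC (Cminus (Cplus N r) (RtoC 1))))))
       (Copp (Cmult r
         (sum_n_m (fun k =>
            Cdiv (HarmC (Cminus (Cplus (RtoC (INR (n - k))) r) (RtoC 1)))
                 (Cmult (RtoC (INR k)) (Cplus (RtoC (INR (n - k))) r))) 1 n))))
  /\
  (forall n : nat,
     sum_n_m (fun k => (-1) ^ (k - 1) * Binomial.C n k / (INR k + 1) * (Harm k) ^ 2) 1 n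
     = / (2 * (INR n + 1)) * (3 * Harm2 n - (Harm n) ^ 2)).
Proof.
  split; [exact part1 | exact part2].
Qed.
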